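(* For every $w\in\Sigma^+$ and every $k\in\mathbb{N}$ there exist $p\in\mathbb{N}$ with $p\ge1$ and $v\in\Sigma^*$ such that $v\neq w^p$ and $w^p\equiv_k v$.
   Context: $\Sigma$ is a fixed finite alphabet. For $w \in \Sigma^*$, $\mathsf{Facs}(w)$ is the set of all factors (contiguous subwords, including $\varepsilon$ and $w$) of $w$. The structure $\mathfrak{A}_w$ representing $w$ has universe $\mathsf{Facs}(w)\cup\{\perp\}$, a ternary relation $R_\circ=\{(x,y,z)\in\mathsf{Facs}(w)^3 : x=y\cdot z\}$, for each letter $\mathtt{a}\in\Sigma$ a constant interpreted as $\mathtt{a}$ if $\mathtt{a}$ occurs in $w$ and as $\perp$ otherwise, and a constant $\varepsilon$ interpreted as the empty word. The $k$-round Ehrenfeucht–Fraïssé game on $\mathfrak{A}_w,\mathfrak{A}_v$: in each round $i$, Spoiler picks one of the two structures and an element of its universe, Duplicator answers with an element of the other structure's universe; let $a_i$ (in $\mathfrak{A}_w$) and $b_i$ (in $\mathfrak{A}_v$) be the chosen elements. Duplicator wins if the tuples $(a_1,\dots,a_k,\vec c^{\,\mathfrak{A}_w})$ and $(b_1,\dots,b_k,\vec c^{\,\mathfrak{A}_v})$, where $\vec c$ lists the interpretations of all constants, form a partial isomorphism: for all indices $i,j,l$, $a_i$ equals the interpretation of a constant $c$ iff $b_i$ equals the interpretation of $c$; $a_i=a_j$ iff $b_i=b_j$; and $a_i=a_j\cdot a_l$ iff $b_i=b_j\cdot b_l$. We write $w\equiv_k v$ if Duplicator has a winning strategy in the $k$-round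 game. *)

(* Defs.v *)
From mathcomp Require Import all_boot.
Set Implicit Arguments. Unset Strict Implicit. Unset Printing Implicit Defensive.

Section EF.
Variable Sigma : finType.

(* Elements of the universe of A_w: [Some u] is the factor u, [None] is bot. *)
Definition elt := option (seq Sigma).

Definition univ (w : seq Sigma) (x : elt) : bool :=
  if x is Some u then infix u w else true.

Definition consts (w : seq Sigma) : seq elt :=
  Some [::] :: [seq (if a \in w then Some [:: a] else None) | a <- enum Sigma].

Definition relc (x y z : elt) : bool :=
  match x, y, z with
  | Some x', Some y', Some z' => x' == y' ++ z'
  | _, _, _ => false
  end.

Definition partial_iso (w v : seq Sigma) (as_ bs : seq elt) : Prop :=
  let A := as_ ++ consts w in
  let B := bs ++ consts v in
  size as_ = size bs /\
  forall i j l, i < size A -> j < size A -> l < size A ->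
    ((nth None A i == nth None A j) = (nth None B i == nth None B j)) /\
    (relc (nth None A i) (nth None A j) (nth None A l)
     = relc (nth None B i) (nth None B j) (nth None B l)).

Fixpoint dup_wins (n : nat) (w v : seq Sigma) (as_ bs : seq elt) : Prop :=
  match n with
  | 0 => partial_iso w v as_ bs
  | n'.+1 =>
      (forall a, univ w a -> exists2 b, univ v b &
          dup_wins n' w v (rcons as_ a) (rcons bs b)) /\
      (forall b, univ v b -> exists2 a, univ w a &
          dup_wins n' w v (rcons as_ a) (rcons bs b))
  end.

Definition ef_equiv (k : nat) (w v : seq Sigma) : Prop := dup_wins k w v [::] [::].

Definition wpow (w : seq Sigma) (p : nat) : seq Sigma := flatten (nseq p w).

End EF.

(* Main.v *)
Require Import Defs.
From mathcomp Require Import all_boot.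
From mathcomp Require Import zify.
From Stdlib Require Import Lia.
Set Implicit Arguments. Unset Strict Implicit. Unset Printing Implicit Defensive.

Fixpoint TT (A : finType) (n : nat) : finType :=
  match n with 0 => A | n'.+1 => ({set TT A n'} : finType) end.

Section Proof.
Variable Sigma : finType.
Variable N : nat.

Definition Atom := {ffun 'I_N * 'I_N * 'I_N -> bool * bool}.

Definition atom (w : seq Sigma) (as_ : seq (elt Sigma)) : Atom :=
  [ffun t : 'I_N * 'I_N * 'I_N =>
    let A := as_ ++ consts w in
    (nth None A t.1.1 == nth None A t.1.2,
     relc (nth None A t.1.1) (nth None A t.1.2) (nth None A t.2))].

Definition facs (w : seq Sigma) : seq (seq Sigma) :=
  [seq u <- [seq take j (drop i w) | i <- iota 0 (size w).+1, j <- iota 0 (size w).+1]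
    | infix u w].

Definition U (w : seq Sigma) : seq (elt Sigma) := None :: [seq Some u | u <- facs w].

Lemma U_univ w a : (a \in U w) = univ w a.
Proof.
case: a => [u|] //=; rewrite inE /= mem_map; last by move=> x y [].
rewrite /facs mem_filter; apply/andP/idP => [[]//|H]; split => //.
apply/allpairsP; case/infixP: H => s [s' E].
exists (size s, size u) => /=; split.
- by rewrite -[0 :: _]/(iota 0 (size w).+1) mem_iota E !size_cat; lia.
- by rewrite -[0 :: _]/(iota 0 (size w).+1) mem_iota E !size_cat; lia.
- by rewrite E drop_size_cat // take_size_cat.
Qed.

Fixpoint tp (n : nat) (w : seq Sigma) (as_ : seq (elt Sigma)) : TT Atom n :=
  match n with
  | 0 => atom w as_
  | n'.+1 => [set x in [seq tp n' w (rcons as_ a) | a <- U w]]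
  end.

Lemma tpS n w as_ : tp n.+1 w as_ = [set x in [seq tp n w (rcons as_ a) | a <- U w]].
Proof. by []. Qed.

Lemma size_consts (w v : seq Sigma) : size (consts w) = size (consts v).
Proof. by rewrite /consts /= !size_map. Qed.

Lemma atom_iso w v as_ bs : size as_ = size bs ->
  size as_ + size (consts w) <= N ->
  atom w as_ = atom v bs -> partial_iso w v as_ bs.
Proof.
move=> Hs HN Ha; split => // i j l; rewrite size_cat => Hi Hj Hl.
have Hi' : i < N by lia.
have Hj' : j < N by lia.
have Hl' : l < N by lia.
have := congr1 (fun f : Atom => f (Ordinal Hi', Ordinal Hj', Ordinal Hl')) Ha.
by rewrite !ffunE /= => -[-> ->].
Qed.

Lemma tp_wins n w v as_ bs : size as_ = size bs ->
  size as_ + n + size (consts w) <= N ->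
  tp n w as_ = tp n v bs -> dup_wins n w v as_ bs.
Proof.
elim: n as_ bs => [|n IH] as_ bs Hs HN Ht.
  by apply: atom_iso => //; lia.
rewrite !tpS in Ht.
split.
- move=> a Ha.
  have : tp n w (rcons as_ a) \in [set x in [seq tp n w (rcons as_ a) | a <- U w]].
    by rewrite inE; apply/mapP; exists a => //; rewrite U_univ.
  rewrite Ht inE => /mapP [b Hb Eb].
  exists b; first by rewrite -U_univ.
  apply: IH; rewrite ?size_rcons ?Hs //; lia.
- move=> b Hb.
  have : tp n v (rcons bs b) \in [set x in [seq tp n v (rcons bs a) | a <- U v]].
    by rewrite inE; apply/mapP; exists b => //; rewrite U_univ.
  rewrite -Ht inE => /mapP [a Ha Ea].
  exists a; first by rewrite -U_univ.
  apply: IH; rewrite ?size_rcons ?Hs //; lia.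
Qed.

End Proof.

Lemma size_wpow (Sigma : finType) (w : seq Sigma) p : size (wpow w p) = p * size w.
Proof. by elim: p => //= p IH; rewrite /wpow /= size_cat -/(wpow w p) IH mulSn. Qed.

Theorem proposition4p9 (Sigma : finType) (w : seq Sigma) (k : nat) :
  w != [::] ->
  exists p : nat, 1 <= p /\
    exists v : seq Sigma, v != wpow w p /\ ef_equiv k (wpow w p) v.
Proof.
move=> Hw.
set N := k + size (consts w).
set T := TT (Atom N) k.
pose f (i : 'I_(#|T|.+1)) : T := tp N k (wpow w i.+1) [::].
have [/existsP [i /existsP [j /andP [Hij /eqP Hf]]] | Hn] :=
  boolP [exists i, exists j, (i != j) && (f i == f j)].
- exists i.+1; split => //; exists (wpow w j.+1); split.
    apply/negP => /eqP /(congr1 size); rewrite !size_wpow => /eqP.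
    rewrite eqn_mul2r; case: (size w =P 0) => [/size0nil E|_] /=.
      by rewrite E in Hw.
    by move/eqP => [] E; move: Hij; rewrite -(inj_eq val_inj) /= E eqxx.
  apply: (@tp_wins _ N) => //; rewrite ?(size_consts _ w) /N /=; try lia.
- exfalso.
  have Hinj : injective f.
    move=> i j E; apply/eqP; apply: contraNT Hn => Hij.
    by apply/existsP; exists i; apply/existsP; exists j; rewrite Hij E eqxx.
  by have := leq_card f Hinj; rewrite card_ord ltnn.
Qed.
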